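(* For $u\in\{0,1\}^3$ and $n\ge1$, let $f_u(X,Y,Z)=\bigoplus_{i=1}^n t_u(x_iy_iz_i)$, where Alice, Bob and Carol hold $X=(x_1,\dots,x_n)$, $Y=(y_1,\dots,y_n)$, $Z=(z_1,\dots,z_n)\in\{0,1\}^n$ respectively, $t_u(w)=1$ if $w=u$ and $0$ otherwise, and the inputs satisfy the promise that every triple $x_iy_iz_i$ has the same parity as $u$ (i.e. $x_i\oplus y_i\oplus z_i=u_1\oplus u_2\oplus u_3$ for all $i$). Then each of the eight functions $f_u$ can be computed by a deterministic classical protocol (no shared entanglement) with three bits of communication, at the end of which Alice knows the value; moreover, none of these eight functions can be computed by such a deterministic classical protocol with only two bits of communication.
   Context: In a deterministic classical communication protocol, the three parties have no shared randomness or entanglement and exchange classical bits; the cost is the total number of bits communicated, and the protocol must give the correct value for every input satisfying the promise. *)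

(* Defs.v *)
From mathcomp Require Import all_boot.
Set Implicit Arguments. Unset Strict Implicit. Unset Printing Implicit Defensive.

Definition input (n : nat) := 'I_n -> bool.

Inductive party := Alice | Bob | Carol.

(* Deterministic three-party protocol (blackboard model, no shared randomness,
   no entanglement).  The tree position encodes the transcript so far: at a
   [Send p msg t0 t1] node, party [p] sends the bit [msg (its own input)]
   and the protocol continues in [t0] or [t1] according to that bit.
   At a leaf [Out g], Alice outputs [g X], a function of her input and of
   the transcript (the path to the leaf). *)
Inductive proto (n : nat) : Type :=
| Out : (input n -> bool) -> proto n
| Send : party -> (input n -> bool) -> proto n -> proto n -> proto n.

Definition input_of n (p : party) (X Y Z : input n) : input n :=
  match p with Alice => X | Bob => Y | Carol => Z end.

Fixpoint run n (P : proto n) (X Y Z : input n) : bool :=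
  match P with
  | Out g => g X
  | Send p m t0 t1 =>
      if m (input_of p X Y Z) then run t1 X Y Z else run t0 X Y Z
  end.

Fixpoint cost n (P : proto n) : nat :=
  match P with
  | Out _ => 0
  | Send _ _ t0 t1 => (maxn (cost t0) (cost t1)).+1
  end.

Definition t_u (u1 u2 u3 : bool) (a b c : bool) : bool :=
  [&& a == u1, b == u2 & c == u3].

Definition f_u (u1 u2 u3 : bool) n (X Y Z : input n) : bool :=
  \big[addb/false]_(i < n) t_u u1 u2 u3 (X i) (Y i) (Z i).

Definition promise_u (u1 u2 u3 : bool) n (X Y Z : input n) : Prop :=
  forall i : 'I_n, X i (+) Y i (+) Z i = u1 (+) u2 (+) u3.

Definition computes_fu (u1 u2 u3 : bool) n (P : proto n) : Prop :=
  forall X Y Z : input n, promise_u u1 u2 u3 X Y Z ->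
    run P X Y Z = f_u u1 u2 u3 X Y Z.

(* Main.v *)
Require Import Defs.
From mathcomp Require Import all_boot.
From mathcomp Require Import zify.


Section Up.
Variables (u1 u2 u3 : bool) (n : nat).

Lemma coord x y z : x (+) y (+) z = u1 (+) u2 (+) u3 ->
  2 * t_u u1 u2 u3 x y z + (x (+) u1) + (y (+) u2) + (z (+) u3) = 2.
Proof. by case: x; case: y; case: z; case: u1; case: u2; case: u3. Qed.

Definition cnt (u : bool) (X : input n) := \sum_(i < n) (X i (+) u).

Lemma fu_odd X Y Z : f_u u1 u2 u3 X Y Z = odd (\sum_(i < n) t_u u1 u2 u3 (X i) (Y i) (Z i)).
Proof. rewrite /f_u (big_morph odd oddD (erefl (odd 0))); apply: eq_bigr => i _; by case: t_u. Qed.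

Lemma sum_id {X Y Z} : promise_u u1 u2 u3 X Y Z ->
  2 * (\sum_(i < n) t_u u1 u2 u3 (X i) (Y i) (Z i)) + cnt u1 X + cnt u2 Y + cnt u3 Z = 2 * n.
Proof.
move=> H; rewrite /cnt big_distrr /= -!big_split /=.
rewrite (eq_bigr (fun _ => 2)); last by move=> i _; rewrite coord.
by rewrite sum_nat_const card_ord mulnC.
Qed.

Definition gout (c0 c1 b1 : bool) (X : input n) : bool :=
  let A := cnt u1 X in
  ((2 * n + 12 - (A %% 4 + ((A + c0) %% 2 + 2 * b1) + (c0 + 2 * c1))) %% 4 == 2).

Definition node (p : party) (m : input n -> bool) (k : bool -> proto n) :=
  Send p m (k false) (k true).

Definition Pup : proto n :=
  node Carol (fun Z => cnt u3 Z %% 2 == 1) (fun c0 =>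
  node Carol (fun Z => 2 <= cnt u3 Z %% 4) (fun c1 =>
  node Bob (fun Y => 2 <= cnt u2 Y %% 4) (fun b1 => Out (gout c0 c1 b1)))).

Lemma run_node p m k X Y Z : run (node p m k) X Y Z = run (k (m (input_of p X Y Z))) X Y Z.
Proof. by rewrite /node /=; case: (m _). Qed.

Lemma Pup_ok : computes_fu u1 u2 u3 Pup.
Proof.
move=> X Y Z H; have S := sum_id H.
rewrite fu_odd /Pup !run_node /= /gout.
have -> : forall k, odd k = (k %% 2 == 1) by move=> k; rewrite modn2; case: (odd k).
move: S.
set T := \sum_(i < n) _; set A := cnt u1 X; set B := cnt u2 Y; set C := cnt u3 Z => S.
case E0: (C %% 2 == 1); case E1: (2 <= C %% 4); case E2: (2 <= B %% 4);
 move/eqP: E0 => E0; move/idP: E1 => E1; move/idP: E2 => E2; simpl;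
 apply/eqP/eqP; lia.
Qed.

Lemma Pup_cost : cost Pup <= 3.
Proof. by []. Qed.
End Up.


Definition vec := (bool * bool * bool)%type.
Definition vl (v : vec) : seq bool := let: (x0, x1, x2) := v in [:: x0; x1; x2].
Definition vxor (a b : vec) : vec :=
  let: (a0, a1, a2) := a in let: (b0, b1, b2) := b in (a0 (+) b0, a1 (+) b1, a2 (+) b2).
Definition vecs : seq vec :=
  [:: (false, false, false); (true, false, false); (false, true, false); (true, true, false); (false, false, true); (true, false, true); (false, true, true); (true, true, true)].
Definition Fv (a b : vec) : bool :=
  let: (a0, a1, a2) := a in let: (b0, b1, b2) := b in
  (~~ a0 && ~~ b0) (+) (~~ a1 && ~~ b1) (+) (~~ a2 && ~~ b2).
Definition pairs : seq (vec * vec) := [seq (a, b) | a <- vecs, b <- vecs].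
Definition comp (p : party) (x : vec * vec) : vec :=
  match p with Alice => x.1 | Bob => x.2 | Carol => vxor x.1 x.2 end.
Definition code (v : vec) : nat := let: (x0, x1, x2) := v in x0 + 2 * x1 + 4 * x2.
Definition of_table (t : seq bool) (v : vec) : bool := nth false t (code v).
Fixpoint tables (k : nat) : seq (seq bool) :=
  if k is k'.+1 then map (cons false) (tables k') ++ map (cons true) (tables k') else [:: [::]].
Definition parties := [:: Alice; Bob; Carol].

Definition grp := seq (vec * seq vec).
Definition okb (D : grp) : bool :=
  all (fun g => let l := map (Fv g.1) g.2 in all (fun y => y == head false l) l) D.
Definition fsplit (p : party) (t : seq bool) (s : bool) (D : grp) : grp :=
  [seq (g.1, [seq b <- g.2 | of_table t (comp p (g.1, b)) == s]) | g <- D].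
Definition ftables := map (cons false) (tables 7).
Definition splitb (ps : seq party) (d : grp -> bool) (D : grp) : bool :=
  has (fun p => has (fun t => d (fsplit p t false D) && d (fsplit p t true D)) ftables) ps.
Definition d1b D := okb D || splitb [:: Bob; Carol] okb D.
Definition d2b D := d1b D || splitb parties d1b D.
Definition D0 : grp := [seq (a, vecs) | a <- vecs].


Lemma mem_tables k l : size l = k -> l \in tables k.
Proof.
elim: k l => [|k IH] [|x l] //= /succn_inj Hs.
rewrite mem_cat; case: x; apply/orP; [right|left]; apply: map_f; exact: IH.
Qed.

Definition table_of (h : vec -> bool) : seq bool := map h vecs.
Lemma table_ofE h v : of_table (table_of h) v = h v.
Proof. by case: v => [[[] []] []]. Qed.

Lemma d2b_false : d2b D0 = false.
Proof. vm_compute. reflexivity. Qed.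

Fixpoint In' {T : Type} (x : T) (s : seq T) : Prop :=
  if s is y :: s' then y = x \/ In' x s' else False.
Lemma hasI {T : Type} (a : pred T) (s : seq T) x : In' x s -> a x -> has a s.
Proof. elim: s => //= y s IH [-> ->|/IH H /H ->] //; by rewrite orbT. Qed.

Section Sound.
Variables u1 u2 u3 : bool.
Definition enc (u : bool) (v : vec) : input 3 := fun i => nth false (vl v) i (+) u.
Definition Xa a := enc u1 a.
Definition Yb b := enc u2 b.
Definition Zab a b := enc u3 (vxor a b).
Definition encp p := match p with Alice => enc u1 | Bob => enc u2 | Carol => enc u3 end.
Lemma inp p a b : input_of p (Xa a) (Yb b) (Zab a b) = encp p (comp p (a, b)).
Proof. by case: p. Qed.

Lemma prom a b : promise_u u1 u2 u3 (Xa a) (Yb b) (Zab a b).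
Proof.
case: a b => [[a0 a1] a2] [[b0 b1] b2]; move=> [[|[|[|k]]] Hi] //;
rewrite /Xa /Yb /Zab /enc /=.
- by case: a0; case: b0; case: u1; case: u2; case: u3.
- by case: a1; case: b1; case: u1; case: u2; case: u3.
- by case: a2; case: b2; case: u1; case: u2; case: u3.
Qed.

Lemma fval a b : f_u u1 u2 u3 (Xa a) (Yb b) (Zab a b) = Fv a b.
Proof.
rewrite /f_u !big_ord_recl big_ord0 /Xa /Yb /Zab /enc /=.
case: a b => [[a0 a1] a2] [[b0 b1] b2] /=.
by case: a0; case: b0; case: a1; case: b1; case: a2; case: b2; case: u1; case: u2; case: u3.
Qed.

Definition corr (P : proto 3) (D : grp) :=
  forall g, g \in D -> forall b, b \in g.2 -> run P (Xa g.1) (Yb b) (Zab g.1 b) = Fv g.1 b.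

Lemma okb_G (D : grp) (G : vec -> bool) :
  (forall g, g \in D -> forall b, b \in g.2 -> Fv g.1 b = G g.1) -> okb D.
Proof.
move=> H; apply/allP => g Hg /=.
have : all (pred1 (G g.1)) (map (Fv g.1) g.2).
  by apply/allP => y /mapP [b Hb ->]; rewrite /= H.
case: (map _ _) => //= h t /andP [/eqP -> Ht]; rewrite eqxx /=; exact: Ht.
Qed.

Lemma d0 {P D} : cost P = 0 -> corr P D -> okb D.
Proof.
case: P => // g _ H; apply: (okb_G _ (fun a => g (Xa a))) => gg Hg b Hb.
by rewrite -(H gg Hg b Hb).
Qed.

Lemma exists_table p (m : input 3 -> bool) :
  exists tb sw, tb \in ftables /\ forall v, of_table tb v (+) sw = m (encp p v).
Proof.
set sw := m (encp p (false, false, false)).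
exists (table_of (fun v => m (encp p v) (+) sw)), sw; split.
  rewrite /table_of /= addbb; apply: map_f; exact: mem_tables.
by move=> v; rewrite table_ofE addbK.
Qed.

Lemma corr_split {p m t0 t1 D tb sw} :
  (forall v, of_table tb v (+) sw = m (encp p v)) -> corr (Send p m t0 t1) D ->
  corr (if sw then t1 else t0) (fsplit p tb false D) /\
  corr (if sw then t0 else t1) (fsplit p tb true D).
Proof.
move=> Htb H; split=> g' /mapP [g Hg ->] b /=; rewrite mem_filter => /andP [/eqP Hs Hb];
 rewrite -(H g Hg b Hb) /= inp -Htb Hs; by case: sw {Htb}.
Qed.

Lemma d1_sound {P D} : cost P <= 1 -> corr P D -> d1b D.
Proof.
case: P => [g|p m t0 t1] Hc H.
  by rewrite /d1b (@d0 (Out g) D (erefl 0) H).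
move: Hc; rewrite /= ltnS geq_max !leqn0 => /andP [/eqP Hc0 /eqP Hc1].
case: p H => H.
- rewrite /d1b; apply/orP; left.
  apply: (okb_G _ (fun a => run (Send Alice m t0 t1) (Xa a) (Yb a) (Zab a a))).
  move=> g Hg b Hb; rewrite -(H g Hg b Hb) /=.
  by case: (m _); [move: Hc1 | move: Hc0] => /=; [case: t1 {H Hc0} | case: t0 {H Hc1}].
- rewrite /d1b /d2b /splitb; apply/orP; right; apply: (hasI _ _ Bob); first by simpl; auto.
  have [tb [sw [Htb Hm]]] := exists_table Bob m.
  apply/hasP; exists tb => //.
  have [H0 H1] := corr_split Hm H.
  by case: sw {Hm} H0 H1 => H0 H1; rewrite (d0 _ H0) ?(d0 _ H1).
- rewrite /d1b /d2b /splitb; apply/orP; right; apply: (hasI _ _ Carol); first by simpl; auto.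
  have [tb [sw [Htb Hm]]] := exists_table Carol m.
  apply/hasP; exists tb => //.
  have [H0 H1] := corr_split Hm H.
  by case: sw {Hm} H0 H1 => H0 H1; rewrite (d0 _ H0) ?(d0 _ H1).
Qed.

Lemma d2_sound {P D} : cost P <= 2 -> corr P D -> d2b D.
Proof.
case: P => [g|p m t0 t1] Hc H.
  by rewrite /d2b /d1b (@d0 (Out g) D (erefl 0) H).
move: Hc; rewrite /= ltnS geq_max => /andP [Hc0 Hc1].
rewrite /d1b /d2b /splitb; apply/orP; right; apply: (hasI _ _ p); first by case: p {H}; simpl; auto.
have [tb [sw [Htb Hm]]] := exists_table p m.
apply/hasP; exists tb => //.
have [H0 H1] := corr_split Hm H.
by case: sw {Hm} H0 H1 => H0 H1; rewrite (d1_sound _ H0) ?(d1_sound _ H1).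
Qed.

Lemma lower : ~ (exists P : proto 3, cost P <= 2 /\ computes_fu u1 u2 u3 P).
Proof.
case=> P [Hc HP].
have HD : corr P D0.
  move=> g /mapP [a _ ->] b _ /=; rewrite -fval; apply: HP; exact: prom.
by move: (d2_sound Hc HD); rewrite d2b_false.
Qed.
End Sound.

Theorem theorem3 (u1 u2 u3 : bool) :
  (forall n : nat, 0 < n ->
     exists P : proto n, cost P <= 3 /\ computes_fu u1 u2 u3 P)
  /\
  (exists n : nat, 0 < n /\
     ~ (exists P : proto n, cost P <= 2 /\ computes_fu u1 u2 u3 P)).
Proof.
split.
  move=> n _; exists (Pup u1 u2 u3 n); split; [exact: Pup_cost | exact: Pup_ok].
exists 3; split => //; exact: lower.
Qed.
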